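(* Let $A\in\mathbb{R}^{n\times n}$, $r\in\{1,\dots,n-1\}$ with $\mathrm{Re}(\lambda_r(A))>\mathrm{Re}(\lambda_{r+1}(A))$, let $P\in\mathbb{R}^{n\times n}$ be a permutation matrix with $Pe_i=e_{\pi(i)}$, and let $\bar U_P=\Psi P\begin{bsmallmatrix}K_r\\ O_{n-r,r}\end{bsmallmatrix}\in\mathrm{St}(r,n)$, with $K_r\in\mathbb{C}^{r\times r}$ invertible, be an equilibrium point of the Oja flow $\frac{dU}{dt}=(I_n-UU^{\top})AU$. Then the eigenvalues (with multiplicity) of $\bar U_P^{\top}A\bar U_P$ are $\lambda_{\pi(1)}(A),\dots,\lambda_{\pi(r)}(A)$.
   Context: $\mathrm{St}(r,n):=\{X\in\mathbb{R}^{n\times r}\mid X^{\top}X=I_r\}$. Eigenvalues of $A$ are ordered as $\mathrm{Re}(\lambda_1(A))\ge\dots\ge\mathrm{Re}(\lambda_n(A))$. $\Psi=[\psi_1,\dots,\psi_n]\in\mathbb{C}^{n\times n}$ is an invertible matrix of unit-norm (generalized) eigenvectors of $A$ for $\lambda_1(A),\dots,\lambda_n(A)$ with $\Psi^{-1}A\Psi$ the Jordan form of $A$. *)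

(* Defs.v *)
From HB Require Import structures.
From mathcomp Require Import all_boot all_order all_fingroup all_algebra.
From mathcomp Require Import complex.
From mathcomp Require Import reals.
Set Implicit Arguments. Unset Strict Implicit. Unset Printing Implicit Defensive.
Import Order.TTheory GRing.Theory Num.Theory.
Local Open Scope ring_scope.

Definition cmx (R : realType) (m p : nat) (M : 'M[R]_(m, p)) : 'M[R[i]]_(m, p) :=
  map_mx (fun x : R => (x%:C)%C) M.

Definition is_jordan_form (R : realType) (n : nat) (J : 'M[R[i]]_n) (lam : seq R[i]) : Prop :=
  [/\ forall i : 'I_n, J i i = lam`_i,
      forall i j : 'I_n, (j : nat) <> i -> (j : nat) <> i.+1 -> J i j = 0 &
      forall i j : 'I_n, (j : nat) = i.+1 ->
        J i j = 0 \/ (J i j = 1 /\ lam`_i = lam`_j)].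

(* lam = (lambda_1, ..., lambda_n) (0-indexed here) is the list of eigenvalues of A,
   ordered by nonincreasing real part, and Psi is an invertible matrix of unit-norm
   (generalized) eigenvectors such that Psi^-1 A Psi is the Jordan form of A. *)
Definition ordered_jordan_basis (R : realType) (n : nat) (A : 'M[R]_n)
    (lam : seq R[i]) (Psi : 'M[R[i]]_n) : Prop :=
  [/\ size lam = n,
      forall i j : 'I_n, (i <= j)%N -> complex.Re lam`_j <= complex.Re lam`_i,
      Psi \in unitmx,
      forall j : 'I_n, \sum_(i < n) `|Psi i j| ^+ 2 = 1 &
      is_jordan_form (invmx Psi *m cmx A *m Psi) lam].

Definition perm_matrix (F : pzRingType) (n : nat) (pi : 'S_n) : 'M[F]_n :=
  \matrix_(k, i) (k == pi i)%:R.

Definition stiefel (R : realType) (n r : nat) (U : 'M[R]_(n, r)) : Prop :=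
  U^T *m U = 1%:M.

Definition oja_equilibrium (R : realType) (n r : nat) (A : 'M[R]_n) (U : 'M[R]_(n, r)) : Prop :=
  (1%:M - U *m U^T) *m A *m U = 0.

(* Main.v *)
Require Import Defs.
From HB Require Import structures.
From mathcomp Require Import all_boot all_order all_fingroup all_algebra.
From mathcomp Require Import complex.
From mathcomp Require Import reals.
Import Order.TTheory GRing.Theory Num.Theory.
Local Open Scope ring_scope.

Lemma det_ptrig (R : comPzRingType) n (N : 'M[R]_n) (g : 'I_n -> nat)
  (ginj : injective g) (H : forall i j, (g j < g i)%N -> N i j = 0) :
  \det N = \prod_i N i i.
Proof.
rewrite /determinant (bigD1 1%g) //= [X in _ + X]big1 ?addr0.
  by rewrite odd_perm1 expr0 mul1r; apply: eq_bigr => i _; rewrite perm1.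
move=> s hs.
have [i hi] : exists i, (g (s i) < g i)%N.
  apply/existsP; apply: contraR hs; rewrite negb_exists => /forallP hall.
  have le : forall i, (g i <= g (s i))%N by move=> i; rewrite leqNgt hall.
  have hsum : \sum_i g (s i) = \sum_i g i.
    by rewrite [RHS](reindex_inj (@perm_inj _ s)).
  have : (\sum_i (g (s i) - g i) == 0)%N by rewrite sumnB // hsum subnn.
  rewrite sum_nat_eq0 => /forallP h0.
  apply/eqP/permP => i; rewrite perm1; apply: ginj; apply/eqP.
  by move: (h0 i); rewrite implyTb subn_eq0 => h; rewrite eqn_leq h le.
by rewrite (bigD1 i) //= H // mul0r mulr0.
Qed.

Lemma char_poly_sim (F : fieldType) n (M B K : 'M[F]_n) :
  K \in unitmx -> M *m K = K *m B -> char_poly M = char_poly B.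
Proof.
move=> hK hMK.
set Kp := map_mx polyC K.
have e : char_poly_mx M *m Kp = Kp *m char_poly_mx B.
  rewrite /char_poly_mx mulmxBl mulmxBr mul_scalar_mx mul_mx_scalar -!map_mxM hMK //.
have := congr1 determinant e.
rewrite !det_mulmx /Kp det_map_mx [X in _ = X]mulrC /char_poly.
apply: mulIf; rewrite polyC_eq0 -unitfE -unitmxE //.
Qed.

Lemma cmxM (R : realType) (a b c : nat) (X : 'M[R]_(a, b)) (Y : 'M[R]_(b, c)) :
  cmx (X *m Y) = cmx X *m cmx Y.
Proof. exact: (map_mxM (real_complex R)). Qed.

Lemma perm_matrixE (F : pzRingType) n (pi : 'S_n) :
  perm_matrix F pi = perm_mx pi^-1.
Proof.
apply/matrixP => k i; rewrite /perm_matrix /perm_mx !mxE.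
have -> : (k == pi i) = (pi^-1%g k == i) by apply/eqP/eqP => [->|<-]; rewrite ?permK ?permKV.
by [].
Qed.

(* n = r + m with r in {1, ..., n-1}, i.e. 0 < r and 0 < m. *)
Theorem proposition3 (R : realType) (r m : nat) (hr : (0 < r)%N) (hm : (0 < m)%N)
    (A : 'M[R]_(r + m)) (lam : seq R[i]) (Psi : 'M[R[i]]_(r + m))
    (hPsi : ordered_jordan_basis A lam Psi)
    (hgap : complex.Re lam`_r < complex.Re lam`_(r.-1))
    (pi : 'S_(r + m)) (K : 'M[R[i]]_r) (hK : K \in unitmx)
    (U : 'M[R]_(r + m, r))
    (hU : cmx U = Psi *m perm_matrix _ pi *m col_mx K 0)
    (hSt : stiefel U)
    (heq : oja_equilibrium A U) :
  char_poly (cmx (U^T *m A *m U)) =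
  \prod_(i < r) ('X - (lam`_(pi (lshift m i)))%:P).
Proof.
case: hPsi => _ _ hunit _ [hdiag hoff _].
have hAU : A *m U = U *m (U^T *m A *m U).
  move: heq; rewrite /oja_equilibrium !mulmxBl !mul1mx => /eqP; rewrite subr_eq0 => /eqP ->.
  by rewrite !mulmxA.
set Bc := cmx (U^T *m A *m U).
set J := invmx Psi *m cmx A *m Psi.
set W := col_mx K (0 : 'M[R[i]]_(m, r)).
rewrite perm_matrixE in hU.
have hAUc : cmx A *m cmx U = cmx U *m Bc by rewrite -!cmxM hAU.
have hJ : J *m (perm_mx pi^-1 *m W) = perm_mx pi^-1 *m W *m Bc.
  have hU' : cmx U = Psi *m (perm_mx pi^-1 *m W) by rewrite hU mulmxA.
  by rewrite /J -!mulmxA -hU' hAUc hU' !mulmxA mulVmx // mul1mx.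
set J' := perm_mx pi *m J *m perm_mx pi^-1.
have hJ' : J' *m W = W *m Bc.
  rewrite /J' -mulmxA -mulmxA hJ !mulmxA -perm_mxM mulgV perm_mx1 mul1mx.
  by [].
have hblk : ulsubmx J' *m K = K *m Bc.
  move: hJ'; rewrite -[J']submxK /W mul_block_col mul_col_mx => /eq_col_mx [+ _].
  by rewrite block_mxKul mulmx0 addr0.
rewrite -(@char_poly_sim _ _ _ _ _ hK hblk).
have hJ'E : ulsubmx J' = \matrix_(i, j) J (pi (lshift m i)) (pi (lshift m j)).
  by apply/matrixP => i j; rewrite /J' -row_permE -col_permE !mxE.
rewrite hJ'E.
move: hdiag hoff; rewrite -/J => hdiag hoff; clearbody J.
rewrite /char_poly (@det_ptrig _ _ _ (fun i => val (pi (lshift m i)))).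
- apply: eq_bigr => i _; by rewrite !mxE eqxx mulr1n hdiag.
- by move=> i j /val_inj /perm_inj /lshift_inj.
move=> i j hij; rewrite !mxE hoff ?polyC0 ?subr0.
- have -> : (i == j) = false.
    by apply/negbTE; apply: contraTneq hij => ->; rewrite ltnn.
  by rewrite mulr0n.
- by move=> e; move: hij => /=; rewrite e ltnn.
- by move=> e; move: hij => /=; rewrite e ltnNge leqnSn.
Qed.
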